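(* Let $A$ be an $n\times n$ matrix with non-negative real entries and $\|A\|_{\max} \le 1$, and let $\lambda_{\max}$ be its Perron eigenvalue (spectral radius). Define \[ \gamma := n\lambda_{\max} - \sum_{i,j=1}^n \min\{A_{ij},A_{ji}\} + \sum_{i,j=1}^n\left(1 + \min\{A_{ij},A_{ji}\} - A_{ij}^2 - A_{ji}^2\right). \] Then $\gamma \ge 0$, and any eigenvalue $\mu$ of $A$ with $\mathrm{Im}(\mu) \ne 0$ satisfies \[ |\mu|^2 \le \min\left\{ \frac{n^2 + n\lambda_{\max} - 2\lambda_{\max}^2 - \gamma}{4},\ \lambda_{\max}^2 \right\} \] and \[ \mathrm{Re}(\mu)^2 \le \min\left\{ \frac{n^2 + 3n\lambda_{\max} - 4\lambda_{\max}^2 - \gamma}{8},\ \lambda_{\max}^2 \right\}. \]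
   Context: $\|A\|_{\max}$ denotes the largest absolute value of an entry of $A$. The Perron eigenvalue of a non-negative matrix is its spectral radius, which is an eigenvalue by Perron–Frobenius theory. *)

(* Defs.v *)
From HB Require Import structures.
From mathcomp Require Import all_boot all_order all_algebra.
From mathcomp Require Import complex.
Set Implicit Arguments. Unset Strict Implicit. Unset Printing Implicit Defensive.
Import Order.TTheory GRing.Theory Num.Theory.
Local Open Scope ring_scope.

Definition cmx (R : rcfType) (n : nat) (A : 'M[R]_n) : 'M[R[i]]_n :=
  map_mx (fun x : R => Complex x 0) A.

Definition is_ceig (R : rcfType) (n : nat) (A : 'M[R]_n) (a b : R) : Prop :=
  eigenvalue (cmx A) (Complex a b).

Definition spectral_radius_is (R : rcfType) (n : nat) (A : 'M[R]_n) (r : R) : Prop :=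
  [/\ 0 <= r,
      (exists a b, is_ceig A a b /\ a ^+ 2 + b ^+ 2 = r ^+ 2) &
      (forall a b, is_ceig A a b -> a ^+ 2 + b ^+ 2 <= r ^+ 2)].

Definition gamma (R : rcfType) (n : nat) (A : 'M[R]_n) (lam : R) : R :=
  n%:R * lam - \sum_(i < n) \sum_(j < n) Num.min (A i j) (A j i)
  + \sum_(i < n) \sum_(j < n)
      (1 + Num.min (A i j) (A j i) - A i j ^+ 2 - A j i ^+ 2).

(* Main.v *)
Require Import Defs.
From HB Require Import structures.
From mathcomp Require Import all_boot all_order all_algebra.
From mathcomp Require Import complex.
From mathcomp Require Import polyrcf.
From mathcomp Require Import lra.
From Stdlib Require Import Classical.
Import Order.TTheory GRing.Theory Num.Theory.
Local Open Scope ring_scope.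

Lemma sq_le (R : realFieldType) (x y : R) : 0 <= x -> 0 <= y -> x ^+ 2 <= y ^+ 2 -> x <= y.
Proof. move=> x0 y0 h. rewrite -(@ler_pXn2r _ 2) ?nnegrE //. Qed.

Section MM.
Variable R : rcfType.
Implicit Types (p : {poly R}).

Definition nnegmx {m n} (M : 'M[R]_(m,n)) := forall i j, 0 <= M i j.
Definition Pprop {n} (M : 'M[R]_n) :=
  forall k (x : 'M[R]_(n,k)), nnegmx (M *m x) -> nnegmx x.
Definition Qprop p (t : R) := forall x, t <= x -> ~~ root p x.

Lemma charE n (A : 'M[R]_n) s : (char_poly A).[s] = \det (s%:M - A).
Proof.
rewrite /char_poly -[_.[s]]/(horner_eval s _) -det_map_mx.
congr (\det _); apply/matrixP => i j; rewrite !mxE /horner_eval.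
by rewrite /= horner_evalE hornerD hornerN hornerMn hornerX hornerC.
Qed.

Lemma monic_pos p t : p \is monic -> Qprop p t -> 0 < p.[t].
Proof.
move=> mp Q; have lc : lead_coef p = 1 by apply/eqP.
have [N HN] : exists N, forall x, N <= x -> lead_coef p <= p.[x].
  by apply: poly_pinfty_gt_lc; rewrite lc ltr01.
rewrite lc in HN.
rewrite ltNge; apply/negP => le0.
have tM : t <= Num.max N t by rewrite le_max lexx orbT.
have HM : 1 <= p.[Num.max N t] by apply: HN; rewrite le_max lexx.
have [x] := @polyrcf.poly_ivt _ p _ _ tM (mulr_le0_ge0 le0 (le_trans ler01 HM)).
rewrite in_itv /= => /andP[tx _] rx.
by move: (Q x tx); rewrite rx.
Qed.

Lemma nnegmx_mul m n k (A : 'M[R]_(m,n)) (B : 'M[R]_(n,k)) :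
  nnegmx A -> nnegmx B -> nnegmx (A *m B).
Proof.
move=> HA HB i j; rewrite mxE; apply: sumr_ge0 => l _; exact: mulr_ge0.
Qed.

Lemma nnegmx_add m n (A B : 'M[R]_(m,n)) :
  nnegmx A -> nnegmx B -> nnegmx (A + B).
Proof. by move=> HA HB i j; rewrite mxE; apply: addr_ge0. Qed.

Lemma Pinv n (M : 'M[R]_n) : Pprop M -> M \in unitmx -> nnegmx (invmx M).
Proof.
move=> PM uM; apply: PM; rewrite mulmxV // => i j; rewrite mxE; exact: ler0n.
Qed.

Lemma det_schur n (d : 'M[R]_1) (u : 'M[R]_(1,n)) (v : 'M[R]_(n,1)) (M : 'M[R]_n) :
  M \in unitmx ->
  \det (block_mx d u v M : 'M_(1+n)) = \det M * (d - u *m invmx M *m v) 0 0.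
Proof.
move=> uM.
have -> : block_mx d u v M = block_mx 1%:M (u *m invmx M) 0 1%:M *m
     block_mx (d - u *m invmx M *m v) 0 v M.
  rewrite mulmx_block !mul1mx !mul0mx ?mulmx0 ?addr0 ?add0r.

  by rewrite subrK mulmxKV.
rewrite det_mulmx det_ublock det_lblock !det1 !mul1r det_mx11 mulrC.
done.
Qed.


Lemma nnegmx_col m1 m2 k (X : 'M[R]_(m1,k)) (Y : 'M[R]_(m2,k)) :
  nnegmx X -> nnegmx Y -> nnegmx (col_mx X Y).
Proof. by move=> HX HY i j; rewrite mxE; case: splitP => l _. Qed.

Lemma blk_split n (A1 : 'M[R]_(1 + n)) s :
  s%:M - A1 = block_mx (s%:M - ulsubmx A1) (- ursubmx A1) (- dlsubmx A1)
                       (s%:M - drsubmx A1).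
Proof.
by rewrite -[A1 in LHS]submxK [s%:M]scalar_mx_block opp_block_mx add_block_mx !add0r.
Qed.

Lemma char_schur n (A1 : 'M[R]_(1 + n)) s :
  (s%:M - drsubmx A1) \in unitmx ->
  (char_poly A1).[s] = \det (s%:M - drsubmx A1) *
     (s - ulsubmx A1 0 0 - (ursubmx A1 *m invmx (s%:M - drsubmx A1) *m dlsubmx A1) 0 0).
Proof.
move=> uM; rewrite charE blk_split det_schur //.
apply: f_equal.
rewrite mulNmx mulmxN opprK [in LHS]mxE [(s%:M - _) 0 0]mxE [s%:M 0 0]mxE eqxx mulr1n.
by rewrite mulNmx [(- (_ *m _)) 0 0]mxE [(- ulsubmx A1) 0 0]mxE.
Qed.

Theorem Mthm n : forall (A : 'M[R]_n) t, nnegmx A -> Qprop (char_poly A) t ->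
  Pprop (t%:M - A).
Proof.
elim: n => [|n IH].

all: move=> A t A0 QA.
  by move=> k x _ i; case: i.
pose A1 : 'M[R]_(1 + n) := A.
pose a := ulsubmx A1; pose r := ursubmx A1; pose c := dlsubmx A1.
pose A' := drsubmx A1.
have A'0 : nnegmx A' by move=> i j; rewrite !mxE; exact: A0.
have r0 : nnegmx r by move=> i j; rewrite !mxE; exact: A0.
have c0 : nnegmx c by move=> i j; rewrite !mxE; exact: A0.
set p' := char_poly A'.
have good : forall s, Qprop p' s ->
   [/\ 0 < \det (s%:M - A'), (s%:M - A') \in unitmx,
       nnegmx (invmx (s%:M - A')) &
       (char_poly A).[s] = \det (s%:M - A') *
          (s - a 0 0 - (r *m invmx (s%:M - A') *m c) 0 0)].
  move=> s Qs.
  have dpos : 0 < \det (s%:M - A') by rewrite -charE; apply: monic_pos => //; exact: char_poly_monic.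
  have uM : (s%:M - A') \in unitmx by rewrite unitmxE unitfE gt_eqF.
  split => //; first exact: Pinv (IH A' s A'0 Qs) uM.
  exact: (@char_schur n A1 s uM).
have QA' : Qprop p' t.
  move=> x0 tx0; apply/negP => rx0.
  have p'0 : p' != 0 by rewrite monic_neq0 // char_poly_monic.
  have := root_in_cauchy_bound p'0 rx0; rewrite in_itv /= => /andP[_ x0cb].
  case: (prev_rootP p' (t - 1) (cauchy_bound p')) => [p'eq0|y _ py0 yin ynr|c' _ _ nr].
  - by rewrite p'eq0 eqxx in p'0.
  - have x0y : x0 <= y.
      rewrite leNgt; apply/negP => yx0.
      by move: (ynr x0); rewrite in_itv /= yx0 x0cb rx0 => /(_ isT).
    have Qy : forall s, y < s -> Qprop p' s.
      move=> s ys x sx; have [xcb|cbx] := ltP x (cauchy_bound p').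
        by apply: ynr; rewrite in_itv /= xcb andbT (lt_le_trans ys sx).
      by apply: ge_cauchy_bound => //; rewrite in_itv /= cbx.
    pose g := char_poly A - ('X - (a 0 0)%:P) * p'.
    have gneg : forall s, y < s -> g.[s] <= 0.
      move=> s ys; have [dpos _ inv0 cE] := good s (Qy s ys).
      rewrite /g hornerD hornerN hornerM hornerD hornerN hornerX hornerC.
      rewrite cE /p' charE.
      have : 0 <= (r *m invmx (s%:M - A') *m c) 0 0.
        by apply: nnegmx_mul => //; apply: nnegmx_mul.
      move: dpos; set D := \det _; set q := (_ *m _ *m _) 0 0 => dpos q0.
      have : 0 <= D * q by apply: mulr_ge0 => //; exact: ltW.
      nra.
    have gy : g.[y] <= 0.
      rewrite leNgt; apply/negP => gpos.
      have [d d0 Hd] := poly_cont y g gpos.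
      have : `|(y + d / 2) - y| < d.
        by rewrite addrC addKr ger0_norm ?divr_ge0 ?ltW // ltr_pdivrMr // ltr_pMr // ltr1n.
      move/Hd => H.
      have := gneg (y + d / 2); rewrite ltrDl divr_gt0 // => /(_ isT) gs.
      have := ler_norm (g.[y] - g.[y + d / 2]).
      rewrite distrC => H2.
      have := le_lt_trans H2 H; lra.
    have : g.[y] = (char_poly A).[y].
      by rewrite /g hornerD hornerN hornerM py0 mulr0 subr0.
    have : 0 < (char_poly A).[y].
      apply: monic_pos; first exact: char_poly_monic.
      move=> x yx; apply: QA; exact: le_trans tx0 (le_trans x0y yx).
    lra.
  - have tx : t - 1 < x0 by lra.
    by move: (nr x0); rewrite in_itv /= x0cb tx rx0 => /(_ isT).
have [dpos uM inv0 cpE] := good t QA'.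
pose sig := t - a 0 0 - (r *m invmx (t%:M - A') *m c) 0 0.
have sigpos : 0 < sig.
  have : 0 < (char_poly A).[t] by apply: monic_pos => //; exact: char_poly_monic.
  by rewrite cpE pmulr_rgt0.
move=> k x Hx.
pose x1 : 'M[R]_(1 + n, k) := x.
change (nnegmx x1).
rewrite -[x1]vsubmxK.
have Hx1 : nnegmx ((t%:M - A1) *m col_mx (usubmx x1) (dsubmx x1)) by rewrite vsubmxK.
move: Hx1; move: (usubmx x1) (dsubmx x1) => u0 u1 Hx1.
rewrite blk_split mul_block_col in Hx1.
have Hz0 : nnegmx ((t%:M - a) *m u0 + - r *m u1).
  by move=> i j; have := Hx1 (lshift n i) j; rewrite col_mxEu.
have Hz1 : nnegmx (- c *m u0 + (t%:M - A') *m u1).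
  by move=> i j; have := Hx1 (rshift 1 i) j; rewrite col_mxEd.
set z1 := - c *m u0 + (t%:M - A') *m u1 in Hz1.
have eu1 : u1 = invmx (t%:M - A') *m z1 + invmx (t%:M - A') *m c *m u0.
  have e : (t%:M - A') *m u1 = z1 + c *m u0 by rewrite /z1 mulNmx [RHS]addrC addNKr.
  by rewrite -mulmxA -mulmxDr -e mulKmx.
have e2 : (t%:M - a) - r *m invmx (t%:M - A') *m c = sig%:M.
  rewrite [LHS]mx11_scalar; congr (_%:M).
  rewrite /sig; set X := r *m _ *m c.
  by rewrite !mxE eqxx mulr1n.
have ez0 : (t%:M - a) *m u0 + - r *m u1 =
    sig *: u0 - r *m invmx (t%:M - A') *m z1.
  rewrite -mul_scalar_mx -e2 mulmxBl eu1 mulNmx mulmxDr opprD !mulmxA.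
  by rewrite addrA addrAC !mulmxBl.
have u00 : nnegmx u0.
  have Y0 : nnegmx (r *m invmx (t%:M - A') *m z1).
    by apply: nnegmx_mul => //; apply: nnegmx_mul.
  move: Hz0 Y0; rewrite ez0; move: (r *m _ *m z1) => Y Hz0 Y0 i j.
  have := Hz0 i j; have := Y0 i j; rewrite !mxE => H1 H2.
  have : 0 <= sig * u0 i j by lra.
  by rewrite pmulr_rge0.
apply: nnegmx_col => //.
rewrite eu1; apply: nnegmx_add; apply: nnegmx_mul => //.
exact: nnegmx_mul.
Qed.

Lemma char_poly_tr n (A : 'M[R]_n) : char_poly A^T = char_poly A.
Proof.
rewrite /char_poly -det_tr; congr (\det _); apply/matrixP => i j.
by rewrite !mxE eq_sym.
Qed.

Lemma KL n (A : 'M[R]_n) s (y : 'cV[R]_n) :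
  nnegmx A -> nnegmx y -> (exists i, 0 < y i 0) ->
  (forall i, s * y i 0 <= (A *m y) i 0) ->
  exists x, s <= x /\ root (char_poly A) x.
Proof.
move=> A0 y0 [i yi] Hy.
apply: NNPP => nex.
have Q : Qprop (char_poly A) s.
  move=> x sx; apply/negP => rx; apply: nex; by exists x.
have H : nnegmx ((s%:M - A) *m - y).
  move=> k j; rewrite ord1 mulmxN mulmxBl mul_scalar_mx opprB !mxE.
  by have := Hy k; rewrite !mxE; lra.
have := @Mthm n A s A0 Q 1 (- y) H i 0; rewrite mxE; lra.
Qed.

End MM.
Arguments nnegmx {R m n}.
Arguments Pprop {R n}.
Arguments Qprop {R}.

Section CC.
Variable R : rcfType.

Definition nC (z : R[i]) : R := complex.Re `|z|.

Lemma normC_nC (z : R[i]) : `|z| = (nC z)%:C%C.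
Proof. by rewrite /nC normc_def. Qed.

Lemma nC_ge0 (z : R[i]) : 0 <= nC z.
Proof. by rewrite -lecR -normC_nC normr_ge0. Qed.

Lemma nC_gt0 (z : R[i]) : z != 0 -> 0 < nC z.
Proof. by move=> nz; rewrite -ltcR -normC_nC normr_gt0. Qed.

Lemma nC_real (x : R) : nC (x%:C%C) = `|x|.
Proof. by rewrite /nC normc_def /= expr0n /= addr0 sqrtr_sqr. Qed.

Lemma nCM (x y : R[i]) : nC (x * y) = nC x * nC y.
Proof.
apply: (@complexI R); rewrite rmorphM /= -!normC_nC; exact: normrM.
Qed.

Lemma nC_sum n (f : 'I_n -> R[i]) : nC (\sum_i f i) <= \sum_i nC (f i).
Proof.
rewrite -lecR -normC_nC.
apply: le_trans (ler_norm_sum _ _ _) _.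
rewrite rmorph_sum; apply: ler_sum => i _; rewrite normC_nC //.
Qed.


Lemma cmxE n (A : 'M[R]_n) : cmx A = map_mx (real_complex R) A.
Proof. by []. Qed.

Lemma core n (S A : 'M[R]_n) (d : R[i]) : nnegmx S ->
  (forall i j, S i j <= A i j) -> eigenvalue (cmx S) d ->
  exists x, nC d <= x /\ root (char_poly A) x.
Proof.
move=> S0 SA /eigenvalueP [v Hv vn0].
pose y : 'cV[R]_n := \col_i nC (v 0 i).
rewrite -char_poly_tr.
apply: (@KL _ _ _ _ y).
- by move=> i j; rewrite mxE; apply: le_trans (SA _ _).
- by move=> i j; rewrite mxE; exact: nC_ge0.
- have [i vi] : exists i, v 0 i != 0.
    apply: NNPP => H; apply: (negP vn0); apply/eqP/rowP => i; rewrite mxE.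
    by case: (eqVneq (v 0 i) 0) => // vi; case: H; exists i.
  by exists i; rewrite mxE; apply: nC_gt0.
- move=> j.
  have e : \sum_i v 0 i * (S i j)%:C%C = d * v 0 j.
    have := congr1 (fun M : 'rV[R[i]]_n => M 0 j) Hv; rewrite cmxE !mxE => <-.
    by apply: eq_bigr => i _; rewrite mxE.
  rewrite mxE -nCM -e.
  have H1 := @nC_sum n (fun i => v 0 i * (S i j)%:C%C).
  apply: (le_trans H1).
  rewrite mxE; apply: ler_sum => i _; rewrite nCM nC_real !mxE mulrC.
  rewrite ger0_norm //; apply: ler_wpM2r; first exact: nC_ge0.
  exact: SA.
Qed.

Lemma root_eig n (A : 'M[R]_n) x : root (char_poly A) x -> is_ceig A x 0.
Proof.
move=> rx; rewrite /is_ceig eigenvalue_root_char cmxE -map_char_poly.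
by rewrite -[Complex x 0]/((real_complex R) x) fmorph_root.
Qed.

Lemma nC_cplx (a b : R) : nC (Complex a b) = Num.sqrt (a ^+ 2 + b ^+ 2).
Proof. by rewrite /nC normc_def. Qed.

Lemma dbg1 n (A : 'M[R]_n) x : root (char_poly A) x -> True.
Proof. move=> rx. have := @root_eig n A x rx. done. Qed.

Lemma eig_le n (S A : 'M[R]_n) lam d : nnegmx S ->
  (forall i j, S i j <= A i j) -> 0 <= lam ->
  (forall a b, is_ceig A a b -> a ^+ 2 + b ^+ 2 <= lam ^+ 2) ->
  eigenvalue (cmx S) d -> nC d <= lam.
Proof.
move=> S0 SA lam0 bnd eig.
have [x [le rx]] := @core n S A d S0 SA eig.
have := bnd x 0 (@root_eig n A x rx); rewrite expr0n addr0 => h.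
have x0 : 0 <= x := le_trans (nC_ge0 d) le.
have : x <= lam by apply: sq_le.
exact: le_trans.
Qed.

Lemma PF1 n (A : 'M[R]_n) lam : nnegmx A -> spectral_radius_is A lam ->
  is_ceig A lam 0.
Proof.
move=> A0 [lam0 [a0 [b0 [eig e]]] bnd].
have AA : forall i j, A i j <= A i j by move=> i j; exact: lexx.
have [x [le rx]] := @core n A A _ A0 AA eig.
have e2 : nC (Complex a0 b0) = lam by rewrite nC_cplx e sqrtr_sqr ger0_norm.
rewrite e2 in le.
have := bnd x 0 (@root_eig n A x rx); rewrite expr0n addr0 => h.
have x0 : 0 <= x := le_trans lam0 le.
have xl : x <= lam by apply: sq_le.
have -> : lam = x by apply/eqP; rewrite eq_le le xl.
exact: (@root_eig n A x rx).
Qed.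

Lemma conjCE (z : R[i]) : Num.conj z = conjc z.
Proof. by []. Qed.

Lemma conjC_real (x : R) : Num.conj (x%:C%C) = x%:C%C.
Proof. by rewrite conjCE /= oppr0. Qed.

Lemma nC_conj (z : R[i]) : nC (Num.conj z) = nC z.
Proof. by rewrite /nC conjCE normcJ. Qed.

Lemma PF2 n (A : 'M[R]_n) lam : nnegmx A -> 0 <= lam ->
  (forall a b, is_ceig A a b -> a ^+ 2 + b ^+ 2 <= lam ^+ 2) ->
  \sum_i \sum_j Num.min (A i j) (A j i) <= n%:R * lam.
Proof.
move=> A0 lam0 bnd.
pose S : 'M[R]_n := \matrix_(i, j) Num.min (A i j) (A j i).
have S0 : nnegmx S by move=> i j; rewrite mxE le_min !A0.
have SA : forall i j, S i j <= A i j by move=> i j; rewrite mxE ge_min lexx.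
have Ssym : forall i j, S i j = S j i by move=> i j; rewrite !mxE minC.
pose Sc := cmx S.
have eT : map_mx Num.conj (trmx Sc) = Sc.
  by apply/matrixP => i j; rewrite !mxE conjC_real minC.
have Sn : Sc \is normalmx by apply/normalmxP; rewrite eT.
have eSc := elimT (@orthomx_spectralP _ n Sc) Sn.
move: eSc; set P := spectralmx Sc; set dg := spectral_diag Sc => eSc.
have Pu : P \is unitarymx := spectral_unitarymx Sc.
have Punit := unitarymx_unit Pu.
have iP : invmx P = map_mx Num.conj (trmx P) := invmx_unitary Pu.
have dle : forall k, nC (dg 0 k) <= lam.
  move=> k; apply: (@eig_le n S A lam _ S0 SA lam0 bnd).
  apply/eigenvalueP; exists (row k P).
    rewrite -row_mul -/Sc eSc !mulmxA mulmxV // mul1mx mul_diag_mx.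
    by apply/rowP => j; rewrite !mxE.
  apply/negP => /eqP rk0.
  have := congr1 (row k) (mulmxV Punit).
  rewrite row_mul rk0 mul0mx => /rowP/(_ k); rewrite !mxE eqxx /=.
  by move/eqP; rewrite eq_sym oner_eq0.
pose o : 'cV[R[i]]_n := const_mx 1.
pose w := P *m o.
have ow : map_mx Num.conj (trmx w) = trmx o *m map_mx Num.conj (trmx P).
  rewrite /w trmx_mul map_mxM; congr (_ *m _).
  by apply/matrixP => i j; rewrite !mxE rmorph1.
have key : (trmx o *m Sc *m o) = map_mx Num.conj (trmx w) *m diag_mx dg *m w.
  by rewrite ow eSc iP !mulmxA.
have norm1 : map_mx Num.conj (trmx w) *m w = trmx o *m o.
  by rewrite ow -mulmxA [map_mx _ _ *m (P *m o)]mulmxA -iP (mulVmx Punit) mul1mx.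
have lhs : (trmx o *m Sc *m o) 0 0 = (\sum_i \sum_j S i j)%:C%C.
  rewrite mxE rmorph_sum; apply: eq_bigr => j _.
  rewrite !mxE mulr1 rmorph_sum; apply: eq_bigr => i _.
  by rewrite !mxE mul1r minC.
have rhs : (map_mx Num.conj (trmx w) *m diag_mx dg *m w) 0 0 =
     \sum_k Num.conj (w k 0) * dg 0 k * w k 0.
  by rewrite mxE; apply: eq_bigr => k _; rewrite mul_mx_diag !mxE.
have e1 : \sum_k Num.conj (w k 0) * w k 0 = n%:R.
  transitivity ((map_mx Num.conj (trmx w) *m w) 0 0).
    by rewrite mxE; apply: eq_bigr => k _; rewrite !mxE.
  rewrite norm1 mxE (eq_bigr (fun _ => 1)); last by move=> k _; rewrite !mxE mulr1.
  by rewrite sumr_const card_ord.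
have sqC : forall z : R[i], (nC z ^+ 2)%:C%C = Num.conj z * z.
  by move=> z; rewrite rmorphXn /= -normC_nC normCKC.
have nn : \sum_k nC (w k 0) ^+ 2 = n%:R.
  apply: (@complexI R); rewrite rmorph_sum rmorph_nat -e1.
  by apply: eq_bigr => k _; rewrite -sqC.
have : (\sum_i \sum_j S i j)%:C%C = \sum_k Num.conj (w k 0) * dg 0 k * w k 0.
  by rewrite -lhs key rhs.
move/(congr1 nC); rewrite nC_real => E.
have : \sum_i \sum_j S i j <= `|\sum_i \sum_j S i j| by exact: ler_norm.
rewrite E => H.
have -> : \sum_i \sum_j Num.min (A i j) (A j i) = \sum_i \sum_j S i j.
  by apply: eq_bigr => i _; apply: eq_bigr => j _; rewrite mxE.
apply: (le_trans H).
apply: le_trans (@nC_sum n (fun k => Num.conj (w k 0) * dg 0 k * w k 0)) _.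
rewrite -nn mulr_suml; apply: ler_sum => k _.
rewrite !nCM nC_conj.
have -> : nC (w k 0) * nC (dg 0 k) * nC (w k 0) = nC (w k 0) ^+ 2 * nC (dg 0 k).
  by rewrite mulrAC expr2.
apply: ler_wpM2l => //; exact: exprn_ge0 (nC_ge0 _).
Qed.

Lemma Re_sum n (f : 'I_n -> R[i]) : complex.Re (\sum_k f k) = \sum_k complex.Re (f k).
Proof.
apply: (big_morph (@complex.Re R) (id1 := 0) (op1 := +%R)) => //.
by move=> [x1 y1] [x2 y2].
Qed.

Lemma sum3 n (f : 'I_n -> R) k1 k2 k3 : k1 != k2 -> k1 != k3 -> k2 != k3 ->
  (forall k, 0 <= f k) -> f k1 + f k2 + f k3 <= \sum_k f k.
Proof.
move=> d12 d13 d23 f0.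
rewrite (bigD1 k1) // (bigD1 k2) /=; last by rewrite eq_sym.
rewrite (bigD1 k3) /=; last by rewrite eq_sym d13 eq_sym d23.
have : 0 <= \sum_(i | (i != k1) && (i != k2) && (i != k3)) f i.
  by apply: sumr_ge0 => i _.
lra.
Qed.

Lemma conj_eig n (A : 'M[R]_n) a b : is_ceig A a b -> is_ceig A a (- b).
Proof.
rewrite /is_ceig !eigenvalue_root_char cmxE -map_char_poly => r.
rewrite -[Complex a (- b)]/(conjc (Complex a b)) -complex_root_conj -map_poly_comp.
by rewrite (eq_map_poly (g := real_complex R)) // => x /=; rewrite oppr0.
Qed.

Lemma eig_trig n (B T P : 'M[R[i]]_n) z : P \in unitmx -> T = P *m B *m invmx P ->
  is_trig_mx T -> eigenvalue B z -> exists k, T k k = z.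
Proof.
move=> Pu eT trT /eigenvalueP [v Hv vn0].
have : eigenvalue T z.
  apply/eigenvalueP; exists (v *m invmx P).
    by rewrite eT !mulmxA mulmxKV // Hv scalemxAl.
  apply: contraNneq vn0 => e.
  by rewrite -[v](mulmxKV Pu) e mul0mx.
rewrite eigenvalue_root_char char_poly_trig // /root horner_prod.
move=> /prodf_eq0 [k _]; rewrite hornerXsubC subr_eq0 => /eqP ->.
by exists k.
Qed.

Lemma tcM m k p (X : 'M[R[i]]_(m,k)) (Y : 'M[R[i]]_(k,p)) :
  map_mx Num.conj (trmx (X *m Y)) = map_mx Num.conj (trmx Y) *m map_mx Num.conj (trmx X).
Proof. by rewrite trmx_mul map_mxM. Qed.

Lemma Re_sq (z : R[i]) : complex.Re (z ^+ 2) = complex.Re z ^+ 2 - complex.Im z ^+ 2.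
Proof. by case: z => x y; rewrite /= !expr2. Qed.

Lemma trig_sq n (T : 'M[R[i]]_n) : is_trig_mx T -> \tr (T *m T) = \sum_k T k k ^+ 2.
Proof.
move=> /is_trig_mxP trT; rewrite /mxtrace; apply: eq_bigr => k _.
rewrite mxE (bigD1 k) //= big1 ?addr0 ?expr2 // => j jk.
have [kj|jk'|e] := ltngtP k j.
- by rewrite trT // mul0r.
- by rewrite (trT j k jk') mulr0.
- by move: jk; rewrite (val_inj e) eqxx.
Qed.

Lemma schur_bounds n (A : 'M[R]_n) lam a b :
  is_ceig A lam 0 -> is_ceig A a b -> b != 0 ->
  lam ^+ 2 + 2 * (a ^+ 2 + b ^+ 2) <= \sum_i \sum_j A i j ^+ 2 /\
  2 * (lam ^+ 2 + 2 * a ^+ 2) <=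
     \sum_i \sum_j A i j ^+ 2 + \sum_i \sum_j A i j * A j i.
Proof.
move=> e1 e2 bn0.
have e3 := @conj_eig n A a b e2.
have npos : (0 < n)%N.
  move: A e1 {e2 e3}; case: n => // A /eigenvalueP [v _].
  by rewrite (thinmx0 v) eqxx.
pose B := cmx A.
have [P Pu trT] := Schur B npos.
have Punit := unitarymx_unit Pu.
pose T := P *m B *m invmx P.
have trT' : is_trig_mx T by move: trT; rewrite /similar_to /= conjumx.
have [k1 h1] := @eig_trig n B T P _ Punit (erefl T) trT' e1.
have [k2 h2] := @eig_trig n B T P _ Punit (erefl T) trT' e2.
have [k3 h3] := @eig_trig n B T P _ Punit (erefl T) trT' e3.
have d12 : k1 != k2.
  apply/eqP => e; move: h1; rewrite e h2 => -[_ e']; by apply: (negP bn0); apply/eqP; lra.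
have d13 : k1 != k3.
  apply/eqP => e; move: h1; rewrite e h3 => -[_ e']; by apply: (negP bn0); apply/eqP; lra.
have d23 : k2 != k3.
  apply/eqP => e; move: h2; rewrite e h3 => -[e'].
  by apply: (negP bn0); apply/eqP; lra.
have iP : invmx P = map_mx Num.conj (trmx P) := invmx_unitary Pu.
have PtP : map_mx Num.conj (trmx P) *m P = 1%:M by rewrite -iP (mulVmx Punit).
have TT : T *m T = P *m (B *m B) *m invmx P.
  by rewrite /T !mulmxA (mulmxKV Punit).
have TTc : T *m map_mx Num.conj (trmx T) =
           P *m (B *m map_mx Num.conj (trmx B)) *m invmx P.
  rewrite /T iP !tcM trmxCK !mulmxA.
  by rewrite -[P *m B *m _ *m P]mulmxA PtP mulmx1.
have trTT : \tr (T *m T) = \tr (B *m B).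
  by rewrite TT mxtrace_mulC mulmxA (mulVmx Punit) mul1mx.
have trTTc : \tr (T *m map_mx Num.conj (trmx T)) = \tr (B *m map_mx Num.conj (trmx B)).
  by rewrite TTc mxtrace_mulC mulmxA (mulVmx Punit) mul1mx.
have trBB : \tr (B *m B) = (\sum_i \sum_j A i j * A j i)%:C%C.
  rewrite /mxtrace rmorph_sum; apply: eq_bigr => i _.
  rewrite mxE rmorph_sum; apply: eq_bigr => j _.
  by rewrite /B cmxE !mxE rmorphM.
have trBBc : \tr (B *m map_mx Num.conj (trmx B)) = (\sum_i \sum_j A i j ^+ 2)%:C%C.
  rewrite /mxtrace rmorph_sum; apply: eq_bigr => i _.
  rewrite mxE rmorph_sum; apply: eq_bigr => j _.
  by rewrite /B cmxE !mxE conjC_real rmorphXn expr2.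
pose al k := complex.Re (T k k).
pose be k := complex.Im (T k k).
have H1 : \sum_k (al k ^+ 2 + be k ^+ 2) <= \sum_i \sum_j A i j ^+ 2.
  rewrite -lecR rmorph_sum -trBBc -trTTc.
  apply: (@le_trans _ _ (\sum_i \sum_j `|T i j| ^+ 2)).
    apply: ler_sum => k _.
    rewrite (bigD1 k) //= -[X in X <= _]addr0 -add_Re2_Im2 lerD2l.
    by apply: sumr_ge0 => j _; exact: exprn_ge0.
  rewrite /mxtrace le_eqVlt; apply/orP; left; apply/eqP.
  apply: eq_bigr => i _; rewrite mxE; apply: eq_bigr => j _.
  by rewrite !mxE normCK.
have H2 : \sum_k (al k ^+ 2 - be k ^+ 2) = \sum_i \sum_j A i j * A j i.
  have := congr1 (@complex.Re R) trBB; rewrite -trTT (@trig_sq n T trT') Re_sum /= => <-.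
  by apply: eq_bigr => k _; rewrite Re_sq.
have v1 : al k1 = lam /\ be k1 = 0 by rewrite /al /be h1.
have v2 : al k2 = a /\ be k2 = b by rewrite /al /be h2.
have v3 : al k3 = a /\ be k3 = - b by rewrite /al /be h3.
split.
  have := @sum3 n (fun k => al k ^+ 2 + be k ^+ 2) k1 k2 k3 d12 d13 d23.
  rewrite /= (proj1 v1) (proj2 v1) (proj1 v2) (proj2 v2) (proj1 v3) (proj2 v3).
  move=> /(_ (fun k => addr_ge0 (sqr_ge0 _) (sqr_ge0 _))) H.
  have := le_trans H H1; rewrite sqrrN expr0n /=; lra.
have := @sum3 n (fun k => al k ^+ 2) k1 k2 k3 d12 d13 d23.
rewrite /= (proj1 v1) (proj1 v2) (proj1 v3) => /(_ (fun k => sqr_ge0 _)) H.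
have E : \sum_k (al k ^+ 2 + be k ^+ 2) + \sum_k (al k ^+ 2 - be k ^+ 2) =
         2 * \sum_k al k ^+ 2.
  rewrite -big_split /= mulr_sumr; apply: eq_bigr => k _; lra.
lra.
Qed.

End CC.

Theorem lemma3 (R : rcfType) (n : nat) (A : 'M[R]_n) (lam : R) :
  (forall i j, 0 <= A i j /\ A i j <= 1) ->
  spectral_radius_is A lam ->
  0 <= gamma A lam /\
  (forall a b : R, is_ceig A a b -> b != 0 ->
     a ^+ 2 + b ^+ 2 <=
       Num.min ((n%:R ^+ 2 + n%:R * lam - 2 * lam ^+ 2 - gamma A lam) / 4)
               (lam ^+ 2) /\
     a ^+ 2 <=
       Num.min ((n%:R ^+ 2 + 3 * n%:R * lam - 4 * lam ^+ 2 - gamma A lam) / 8)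
               (lam ^+ 2)).
Proof.
move=> Ab hs; have [lam0 _ bnd] := hs.
have A0 : nnegmx A by move=> i j; exact: (proj1 (Ab i j)).
have hPF1 := @PF1 R n A lam A0 hs.
have hPF2 := @PF2 R n A lam A0 lam0 bnd.
set m := \sum_i \sum_j Num.min (A i j) (A j i) in hPF2.
set F := \sum_i \sum_j A i j ^+ 2.
set t2 := \sum_i \sum_j A i j * A j i.
have ht2 : t2 <= m.
  apply: ler_sum => i _; apply: ler_sum => j _.
  have [x0 x1] := Ab i j; have [y0 y1] := Ab j i.
  rewrite le_min; apply/andP; split; nra.
have F' : \sum_i \sum_j A j i ^+ 2 = F by rewrite /F exchange_big.
have hF : F + \sum_i \sum_j A j i ^+ 2 <= n%:R ^+ 2 + m.
  have -> : n%:R ^+ 2 = \sum_(i < n) \sum_(j < n) (1 : R).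
    by rewrite sumr_const card_ord sumr_const card_ord expr2 mulr_natr.
  rewrite /F /m -!big_split /=; apply: ler_sum => i _.
  rewrite -!big_split /=; apply: ler_sum => j _.
  have [x0 x1] := Ab i j; have [y0 y1] := Ab j i.
  have [xy|yx] := leP (A i j) (A j i).
    nra.
  nra.
have G : gamma A lam = n%:R * lam + n%:R ^+ 2 - 2 * F.
  rewrite /gamma -/m.
  under eq_bigr => i _ do rewrite !sumrB big_split /=.
  rewrite !sumrB big_split /= -/m -/F F'.
  have -> : \sum_(i < n) \sum_(j < n) (1 : R) = n%:R ^+ 2.
    by rewrite sumr_const card_ord sumr_const card_ord expr2 mulr_natr.
  lra.
rewrite F' in hF.
split; first by rewrite G; lra.
move=> a b eig bn0.
have [S1 S2] := @schur_bounds R n A lam a b hPF1 eig bn0.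
have ab := bnd a b eig.
rewrite -/F -/t2 in S1 S2.
have b2 : 0 <= b ^+ 2 by exact: sqr_ge0.
split; rewrite le_min; apply/andP; split; rewrite ?G; try lra.
Qed.
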